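(* Let $P(z)=\sum_{k=0}^mc_ke^{\alpha_kz}$ with $c_k\ge0$, $\alpha_k\in\mathbb{R}$ and $\max_k|\alpha_k|\le\omega$, where $\omega>0$. Then for every $t\in\mathbb{R}$ and every $\tau\in\mathbb{C}$ with $|\tau-t|\le\frac{1}{5\omega}$, \[ \tfrac34P(t)\le|P(\tau)|\le\tfrac54P(t). \]
   Context: Such $P$ is called an exponential polynomial with real exponents of width at most $\omega$. *)

(* Defs.v *)
From Stdlib Require Import Reals.
From Coquelicot Require Import Coquelicot.
Open Scope R_scope.

Definition cexp (z : C) : C :=
  (exp (Re z) * cos (Im z), exp (Re z) * sin (Im z)).

Definition expoly (m : nat) (c alpha : nat -> R) (z : C) : C :=
  sum_n (fun k => RtoC (c k) * cexp (RtoC (alpha k) * z))%C m.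

Definition expoly_R (m : nat) (c alpha : nat -> R) (t : R) : R :=
  sum_f_R0 (fun k => c k * exp (alpha k * t)) m.

(* Main.v *)
Require Import Defs.
From Stdlib Require Import Reals Lra Psatz.
From Coquelicot Require Import Coquelicot.
Open Scope R_scope.

Lemma cexp_shift a t tau : cexp (RtoC a * tau)%C = (RtoC (exp (a*t)) * cexp (RtoC a * (tau - RtoC t)))%C.
Proof. destruct tau as [x y]. unfold cexp, RtoC, Cmult, Cminus, Cplus, Copp, Re, Im; simpl.
replace (a * y + 0 * x) with (a * (y + - 0) + 0 * (x + - t)) by ring.
replace (a * x - 0 * y) with (a * t + (a * (x + - t) - 0 * (y + - 0))) by ring.
rewrite exp_plus.
apply injective_projections; simpl; ring.
Qed.

Lemma cos_lb1 y : Rabs y <= 1 -> 1 - y^2/2 <= cos y.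
Proof. intros H. destruct (cos_bound y 0) as [H1 _].
- pose proof PI2_1. apply Rabs_le_between in H. lra.
- pose proof PI2_1. apply Rabs_le_between in H. lra.
- unfold cos_approx in H1. simpl in H1. unfold cos_term in H1. simpl in H1.
  revert H1. unfold INR, Rdiv. simpl. intros; nra.
Qed.

Lemma key w : Cmod w <= 1/5 -> Cmod (cexp w - 1) <= 1/4.
Proof.
destruct w as [x y]. unfold Cmod, cexp, Re, Im, Cminus, Cplus, Copp, RtoC; simpl.
intros H.
assert (Hs : x*x + y*y <= 1/25).
{ assert (0 <= x*(x*1) + y*(y*1)) by nra.
  pose proof (sqrt_sqrt (x*(x*1)+y*(y*1)) ltac:(lra)).
  assert (sqrt (x * (x * 1) + y * (y * 1)) >= 0) by (apply Rle_ge, sqrt_pos).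
  nra. }
rewrite <- (sqrt_pow2 (1/4)) by lra. apply sqrt_le_1_alt.
set (E := exp x).
assert (HE1 : 1 + x <= E) by apply exp_ineq1_le.
assert (HE2 : E * (1 - x) <= 1).
{ pose proof (exp_ineq1_le (-x)). assert (E * exp (-x) = 1).
  { unfold E; rewrite <- exp_plus. replace (x + - x) with 0 by ring. apply exp_0. }
  assert (0 < E) by apply exp_pos. nra. }
assert (Hx : Rabs x <= 1/5). { apply Rabs_le; nra. }
assert (Hy : Rabs y <= 1). { apply Rabs_le; nra. }
pose proof (cos_lb1 y Hy) as Hc.
pose proof (sin2_cos2 y) as Hsc. unfold Rsqr in Hsc.
apply Rabs_le_between in Hx.
assert (HEp : 0 < E) by apply exp_pos.
assert (Hd : (E - 1)^2 <= 25/16 * x^2).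
{ destruct (Rle_dec 0 x).
  - assert (E - 1 <= 5/4 * x) by nra. nra.
  - nra. }
assert (E <= 5/4) by nra.
transitivity ((E-1)^2 + E * y^2). 2: nra.
assert (E * (1 - cos y) <= E * (y^2/2)) by (apply Rmult_le_compat_l; lra).
replace ((E * cos y + - (1)) * ((E * cos y + - (1)) * 1) +
  (E * sin y + - 0) * ((E * sin y + - 0) * 1)) with ((E-1)^2 + 2 * (E * (1 - cos y))).
- lra.
- apply Rminus_diag_uniq. match goal with |- ?L - ?R = 0 =>
    replace (L - R) with (E*E - E*E*(sin y * sin y + cos y * cos y)) by ring end.
  rewrite Hsc; ring.
Qed.

Lemma term_bound (a c0 t omega : R) (h : C) : 0 < omega -> 0 <= c0 -> Rabs a <= omega ->
  Cmod h <= 1 / (5 * omega) ->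
  Cmod (RtoC c0 * cexp (RtoC a * (h + RtoC t)) - RtoC (c0 * exp (a * t)))%C <= c0 * exp (a*t) / 4.
Proof.
intros Ho Hc Ha Hh.
rewrite (cexp_shift a t).
replace (h + RtoC t - RtoC t)%C with h by ring.
replace (RtoC c0 * (RtoC (exp (a * t)) * cexp (RtoC a * h)) - RtoC (c0 * exp (a * t)))%C
  with (RtoC (c0 * exp (a*t)) * (cexp (RtoC a * h) - 1))%C
  by (rewrite RtoC_mult; ring).
rewrite Cmod_mult, Cmod_R, Rabs_pos_eq.
2: { apply Rmult_le_pos; [lra | apply Rlt_le, exp_pos]. }
assert (Cmod (cexp (RtoC a * h) - 1) <= 1/4).
{ apply key. rewrite Cmod_mult, Cmod_R.
  assert (Rabs a * Cmod h <= omega * (1 / (5 * omega))).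
  { apply Rmult_le_compat; auto. apply Rabs_pos. apply Cmod_ge_0. }
  replace (omega * (1 / (5 * omega))) with (1/5) in H by (field; lra). lra. }
assert (0 <= c0 * exp (a*t)) by (apply Rmult_le_pos; [lra | apply Rlt_le, exp_pos]).
nra.
Qed.

Lemma sum_bound (m : nat) (c alpha : nat -> R) (omega t : R) (h : C) :
  0 < omega ->
  (forall k, (k <= m)%nat -> 0 <= c k) ->
  (forall k, (k <= m)%nat -> Rabs (alpha k) <= omega) ->
  Cmod h <= 1 / (5 * omega) ->
  forall n, (n <= m)%nat ->
  0 <= expoly_R n c alpha t /\
  Cmod (expoly n c alpha (h + RtoC t) - RtoC (expoly_R n c alpha t))%C <= expoly_R n c alpha t / 4.
Proof.
intros Ho Hc Ha Hh n. induction n as [|n IH]; intros Hn.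
- unfold expoly, expoly_R. rewrite sum_O. simpl. split.
  + apply Rmult_le_pos; [apply Hc; lia | apply Rlt_le, exp_pos].
  + apply term_bound with omega; auto with arith.
- destruct (IH ltac:(lia)) as [IH1 IH2].
  unfold expoly, expoly_R in *. rewrite sum_Sn. simpl.
  assert (0 <= c (S n) * exp (alpha (S n) * t)) by
    (apply Rmult_le_pos; [apply Hc; lia | apply Rlt_le, exp_pos]).
  split. lra.
  pose proof (term_bound (alpha (S n)) (c (S n)) t omega h Ho ltac:(apply Hc; lia) ltac:(apply Ha; lia) Hh).
  set (A := sum_n _ n) in *.
  set (B := sum_f_R0 _ n) in *.
  change plus with Cplus.
  rewrite RtoC_plus.
  match goal with |- Cmod (?X + ?Y - (?U + ?V))%C <= _ =>
    replace (X + Y - (U + V))%C with ((X - U) + (Y - V))%C by ring end.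
  eapply Rle_trans. apply Cmod_triangle. lra.
Qed.

Theorem lemma3p8 (m : nat) (c alpha : nat -> R) (omega : R) :
  0 < omega ->
  (forall k, (k <= m)%nat -> 0 <= c k) ->
  (forall k, (k <= m)%nat -> Rabs (alpha k) <= omega) ->
  forall (t : R) (tau : C),
    Cmod (tau - RtoC t)%C <= 1 / (5 * omega) ->
    3 / 4 * expoly_R m c alpha t <= Cmod (expoly m c alpha tau) /\
    Cmod (expoly m c alpha tau) <= 5 / 4 * expoly_R m c alpha t.
Proof.
intros Ho Hc Ha t tau Ht.
destruct (sum_bound m c alpha omega t (tau - RtoC t)%C Ho Hc Ha Ht m (le_n m)) as [H1 H2].
replace (tau - RtoC t + RtoC t)%C with tau in H2 by ring.
set (Z := expoly m c alpha tau) in *.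
set (S := expoly_R m c alpha t) in *.
assert (HS : Cmod (RtoC S) = S) by (rewrite Cmod_R; apply Rabs_pos_eq; lra).
split.
- assert (Cmod (RtoC S) <= Cmod (RtoC S - Z) + Cmod Z).
  { replace (RtoC S) with ((RtoC S - Z) + Z)%C at 1 by ring. apply Cmod_triangle. }
  replace (RtoC S - Z)%C with (- (Z - RtoC S))%C in H by ring.
  rewrite Cmod_opp in H. lra.
- assert (Cmod Z <= Cmod (Z - RtoC S) + Cmod (RtoC S)).
  { replace Z with ((Z - RtoC S) + RtoC S)%C at 1 by ring. apply Cmod_triangle. }
  lra.
Qed.
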